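(* Let $X$ be a fibrewise locally equiconnected space over $B$ and $e:X\to X$ a fibrewise map with $e\circ e=e$. Then $(X,e(X))$ is a closed fibrewise cofibred pair.
   Context: A fibrewise space over $B$ is a space $X$ with $p_X:X\to B$; fibrewise maps satisfy $p_Y\circ f=p_X$. A fibrewise cofibration is a fibrewise map with the homotopy extension property with respect to fibrewise maps and fibrewise homotopies (homotopies $H$ with $p(H(x,t))=p(x)$); closed if also a closed embedding. $(X,A)$ is a closed fibrewise cofibred pair if $A\hookrightarrow X$ is a closed fibrewise cofibration. $X$ is fibrewise locally equiconnected if the diagonal $X\to X\times_BX=\{(x,y):p_X(x)=p_X(y)\}$ is a closed fibrewise cofibration. *)

(* Defs.v *)
From HB Require Import structures.
From mathcomp Require Import all_boot all_order all_algebra.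
From mathcomp Require Import all_classical all_reals all_analysis.
From mathcomp Require Import Rstruct Rstruct_topology.
From Stdlib Require Import Rdefinitions.

Set Implicit Arguments.
Unset Strict Implicit.
Unset Printing Implicit Defensive.

Local Open Scope classical_set_scope.
Local Open Scope ring_scope.

(* The unit interval I = [0,1] of the real line, with the subspace topology
   (set_type carries the initial topology of the inclusion). *)
Definition unitI : Type := set_type (`[0%R, 1%R]%classic : set Rdefinitions.R).

Definition fibrewise_map (B X Y : topologicalType) (pX : X -> B) (pY : Y -> B)
  (f : X -> Y) : Prop :=
  continuous f /\ forall x, pY (f x) = pX x.

Definition fibrewise_homotopy (B X E : topologicalType) (pX : X -> B) (pE : E -> B)
  (H : X * unitI -> E) : Prop :=
  continuous H /\ forall x t, pE (H (x, t)) = pX x.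

Definition fibrewise_cofibration (B A X : topologicalType) (pA : A -> B) (pX : X -> B)
  (i : A -> X) : Prop :=
  fibrewise_map pA pX i /\
  forall (E : topologicalType) (pE : E -> B), continuous pE ->
  forall (f : X -> E) (h : A * unitI -> E),
    fibrewise_map pX pE f -> fibrewise_homotopy pA pE h ->
    (forall a t, set_val t = 0%R -> h (a, t) = f (i a)) ->
    exists H : X * unitI -> E,
      [/\ fibrewise_homotopy pX pE H,
          (forall x t, set_val t = 0%R -> H (x, t) = f x) &
          (forall a t, H (i a, t) = h (a, t))].

Definition closed_embedding (A X : topologicalType) (i : A -> X) : Prop :=
  [/\ injective i,
      (forall U : set A, open U <-> exists V : set X, open V /\ i @^-1` V = U) &
      closed (range i)].

Definition closed_fibrewise_cofibration (B A X : topologicalType) (pA : A -> B)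
  (pX : X -> B) (i : A -> X) : Prop :=
  fibrewise_cofibration pA pX i /\ closed_embedding i.

Definition closed_fibrewise_cofibred_pair (B X : topologicalType) (pX : X -> B)
  (A : set X) : Prop :=
  closed_fibrewise_cofibration (pX \o (@set_val X A)) pX (@set_val X A).

Definition fibprod_set (B X : topologicalType) (pX : X -> B) : set (X * X) :=
  [set z | pX z.1 = pX z.2].

Definition fibprod (B X : topologicalType) (pX : X -> B) : Type :=
  set_type (fibprod_set pX).

Definition fibprod_proj (B X : topologicalType) (pX : X -> B) :
  fibprod pX -> B := fun z => pX (set_val z).1.

Definition diagonal (B X : topologicalType) (pX : X -> B) : X -> fibprod pX :=
  fun x => @exist (X * X) (fun z => z \in fibprod_set pX) (x, x)
             (@mem_set _ (fibprod_set pX) (x, x) (erefl (pX x))).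

Definition fibrewise_LEC (B X : topologicalType) (pX : X -> B) : Prop :=
  closed_fibrewise_cofibration pX (@fibprod_proj B X pX) (@diagonal B X pX).

(* Main.v *)
Set Warnings "-notation-overridden,-ambiguous-paths,-notation-incompatible-prefix,-deprecated".
Require Import Defs.
From HB Require Import structures.
From mathcomp Require Import all_boot all_order all_algebra.
From mathcomp Require Import all_classical all_reals all_analysis.
From mathcomp Require Import Rstruct Rstruct_topology.
From Stdlib Require Import Rdefinitions.
From mathcomp Require Import lra.
Import Order.TTheory GRing.Theory Num.Theory.
Set Implicit Arguments.
Unset Strict Implicit.
Unset Printing Implicit Defensive.
Local Open Scope classical_set_scope.
Local Open Scope ring_scope.
Lemma cont_val (T : topologicalType) (A : set T) : continuous (@set_val T A).
Proof. exact: initial_continuous. Qed.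

Lemma cont_sub (Z T : topologicalType) (A : set T) (g : Z -> set_type A) :
  continuous (fun z => set_val (g z)) -> continuous g.
Proof. move=> h. exact: (@continuous_comp_initial _ _ _ set_val g). Qed.

Lemma cont_pair (Z T U : topologicalType) (f : Z -> T) (g : Z -> U) :
  continuous f -> continuous g -> continuous (fun z => (f z, g z)).
Proof. move=> cf cg z; apply: cvg_pair; [exact: cf | exact: cg]. Qed.

Lemma cont_fst (T U : topologicalType) : continuous (@fst T U).
Proof. move=> z; exact: cvg_fst. Qed.
Lemma cont_snd (T U : topologicalType) : continuous (@snd T U).
Proof. move=> z; exact: cvg_snd. Qed.

Lemma cont_comp (T U V : topologicalType) (f : T -> U) (g : U -> V) :
  continuous f -> continuous g -> continuous (fun x => g (f x)).
Proof. move=> cf cg x; exact: (continuous_comp (cf x) (cg (f x))). Qed.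

Lemma cont_id (T : topologicalType) : continuous (fun x : T => x).
Proof. move=> x; exact: cvg_id. Qed.

Lemma cont_cst (T U : topologicalType) (c : U) : continuous (fun _ : T => c).
Proof. move=> x; exact: cvg_cst. Qed.

Lemma clamp_mem (r : R) : Num.min 1 (Num.max 0 r) \in (`[0%R, 1%R]%classic : set R).
Proof.
apply: mem_set; rewrite /= in_itv /=; apply/andP; split.
  by rewrite le_min ler01 le_max lexx.
by rewrite ge_min lexx.
Qed.

Definition clampI (r : R) : unitI := @exist R (fun x => x \in (`[0%R, 1%R]%classic : set R)) _ (clamp_mem r).

Arguments clampI r%_ring_scope.

Lemma clampI_val r : set_val (clampI r) = Num.min 1 (Num.max 0 r).
Proof. by []. Qed.

Lemma cont_clampI : continuous clampI.
Proof.
apply: cont_sub => /=.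
move=> x; apply: continuous_min; first exact: cvg_cst.
apply: continuous_max; first exact: cvg_cst. exact: cvg_id.
Qed.

Definition Mset (B X : topologicalType) (pX : X -> B) : set (X * X * R) :=
  [set q | pX q.1.1 = pX q.1.2 /\ (q.2 = 0 \/ q.1.1 = q.1.2)].

Lemma f1_mem (B X : topologicalType) (pX : X -> B) (z : fibprod pX) :
  ((set_val z).1, (set_val z).2, 0) \in Mset pX.
Proof. apply: mem_set; split; [exact: (set_valP z) | by left]. Qed.

Definition f1 (B X : topologicalType) (pX : X -> B) (z : fibprod pX) : set_type (Mset pX) :=
  @exist _ (fun q => q \in Mset pX) _ (f1_mem z).

Lemma h1_mem (B X : topologicalType) (pX : X -> B) (p : X * unitI) :
  (p.1, p.1, set_val p.2) \in Mset pX.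
Proof. apply: mem_set; split => //; by right. Qed.

Definition h1 (B X : topologicalType) (pX : X -> B) (p : X * unitI) : set_type (Mset pX) :=
  @exist _ (fun q => q \in Mset pX) _ (@h1_mem _ _ pX p).

Definition pE1 (B X : topologicalType) (pX : X -> B) (q : set_type (Mset pX)) : B :=
  pX (set_val q).1.1.

Lemma om_mem (B X : topologicalType) (pX : X -> B) (q : set_type (Mset pX)) :
  ((set_val q).1.1, (set_val q).1.2) \in fibprod_set pX.
Proof. apply: mem_set; have [h _] := set_valP q; exact: h. Qed.

Definition om (B X : topologicalType) (pX : X -> B) (q : set_type (Mset pX)) : fibprod pX :=
  @exist _ (fun z => z \in fibprod_set pX) _ (om_mem q).

Lemma Gam_mem (B X : topologicalType) (pX : X -> B) (e : X -> X)
  (pe : forall x, pX (e x) = pX x) (x : X) : (x, e x) \in fibprod_set pX.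
Proof. apply: mem_set; rewrite /fibprod_set /=; exact: esym (pe x). Qed.

Definition Gam (B X : topologicalType) (pX : X -> B) (e : X -> X)
  (pe : forall x, pX (e x) = pX x) (x : X) : fibprod pX :=
  @exist _ (fun z => z \in fibprod_set pX) _ (Gam_mem pe x).

Arguments f1 {B X} pX z.
Arguments h1 {B X} pX p.
Arguments pE1 {B X} pX q.
Arguments om {B X} pX q.
Arguments Gam {B X} pX {e} pe x.

Lemma cont_pE1 (B X : topologicalType) (pX : X -> B) : continuous pX -> continuous (pE1 pX).
Proof.
move=> c; rewrite /pE1; apply: (cont_comp _ c); apply: (cont_comp _ (@cont_fst _ _)).
exact: (@cont_comp _ _ _ (@set_val _ _) fst (@cont_val _ _) (@cont_fst _ _)).
Qed.

Lemma cont_f1 (B X : topologicalType) (pX : X -> B) : continuous (f1 pX).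
Proof.
apply: cont_sub => /=; apply: cont_pair; last exact: cont_cst.
apply: cont_pair; [exact: cont_comp (@cont_val _ _) (@cont_fst _ _) |
  exact: cont_comp (@cont_val _ _) (@cont_snd _ _)].
Qed.

Lemma cont_h1 (B X : topologicalType) (pX : X -> B) : continuous (h1 pX).
Proof.
apply: cont_sub => /=; apply: cont_pair; last exact: cont_comp (@cont_snd _ _) (@cont_val _ _).
apply: cont_pair; exact: cont_fst.
Qed.

Lemma cont_om (B X : topologicalType) (pX : X -> B) : continuous (om pX).
Proof.
apply: cont_sub => /=; apply: cont_pair.
  exact: cont_comp (@cont_val _ _) (cont_comp (@cont_fst _ _) (@cont_fst _ _)).
exact: cont_comp (@cont_val _ _) (cont_comp (@cont_fst _ _) (@cont_snd _ _)).
Qed.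

Lemma cont_Gam (B X : topologicalType) (pX : X -> B) (e : X -> X)
  (pe : forall x, pX (e x) = pX x) : continuous e -> continuous (Gam pX pe).
Proof. move=> ce; apply: cont_sub => /=; apply: cont_pair => //; exact: cont_id. Qed.

Lemma sv_inj (T : Type) (A : set T) (u v : set_type A) : set_val u = set_val v -> u = v.
Proof. move=> h; apply: eq_sig_hprop h => x p q; exact: Prop_irrelevance. Qed.

Lemma near_pos (T : topologicalType) (g : T -> R) (p : T) :
  {for p, continuous g} -> 0 < g p -> nbhs p [set y | 0 < g y].
Proof.
move=> c gp; have h : nbhs (g p) [set y : R | 0 < y].
  by apply: open_nbhs_nbhs; split => //; exact: open_gt.
exact: c _ h.
Qed.
Lemma cont_if (T U : topologicalType) (P : T -> bool) (g1 g2 : T -> U) (p : T) :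
  {for p, continuous g1} -> {for p, continuous g2} ->
  (g1 p = g2 p \/ nbhs p [set y | P y = P p]) ->
  {for p, continuous (fun y => if P y then g1 y else g2 y)}.
Proof.
move=> c1 c2 [e|loc] V /= hV.
  have h1 : nbhs p (g1 @^-1` V).
    by apply: c1; case: (P p) hV => //; rewrite e.
  have h2 : nbhs p (g2 @^-1` V).
    by apply: c2; case: (P p) hV => //; rewrite -e.
  apply: filterS (filterI h1 h2) => y [a b] /=; by case: (P y).
case E: (P p) hV => hV.
  have h1 : nbhs p (g1 @^-1` V) by apply: c1.
  apply: filterS (filterI h1 loc) => y [a b] /=; by rewrite b E.
have h2 : nbhs p (g2 @^-1` V) by apply: c2.
apply: filterS (filterI h2 loc) => y [a b] /=; by rewrite b E.
Qed.

Lemma cont_lin (T : topologicalType) (f g : T -> R) (c d : R) :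
  continuous f -> continuous g -> continuous (fun p => c * f p - d * g p).
Proof.
move=> cf cg p.
have h1 : (fun p => c * f p) @ p --> c * f p.
  apply: cvgM; [exact: cvg_cst | exact: cf].
have h2 : (fun p => d * g p) @ p --> d * g p.
  apply: cvgM; [exact: cvg_cst | exact: cg].
exact: (@cvgB _ R^o T (nbhs p) _ _ _ _ _ h1 h2).
Qed.

Lemma cont_lin2 (T : topologicalType) (f g : T -> R) (c : R) :
  continuous f -> continuous g -> continuous (fun p => c * f p - g p).
Proof.
move=> cf cg p.
have h1 : (fun p => c * f p) @ p --> c * f p.
  apply: cvgM; [exact: cvg_cst | exact: cf].
exact: (@cvgB _ R^o T (nbhs p) _ _ _ _ _ h1 (cg p)).
Qed.

Lemma cont_11 (T U V : topologicalType) : continuous (fun w : T * U * V => w.1.1).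
Proof. move=> w; exact: (@continuous_comp _ _ _ fst fst w (@cont_fst _ _ w) (@cont_fst _ _ _)). Qed.
Lemma cont_12 (T U V : topologicalType) : continuous (fun w : T * U * V => w.1.2).
Proof. move=> w; exact: (@continuous_comp _ _ _ fst snd w (@cont_fst _ _ w) (@cont_snd _ _ _)). Qed.

Lemma cont_min (T : topologicalType) (f g : T -> R) :
  continuous f -> continuous g -> continuous (fun p => Num.min (f p) (g p)).
Proof. move=> cf cg p; apply: continuous_min; [exact: cf | exact: cg]. Qed.

Lemma unitI_ge0 (t : unitI) : 0 <= set_val t.
Proof. move: (set_valP t) => /= h; rewrite in_itv /= in h; by case/andP: h. Qed.

Lemma unitI_le1 (t : unitI) : set_val t <= 1.
Proof. move: (set_valP t) => /= h; rewrite in_itv /= in h; by case/andP: h. Qed.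

Lemma clampI_id (t : unitI) (r : R) : r = set_val t -> clampI r = t.
Proof.
move=> ->; apply: sv_inj; rewrite clampI_val.
rewrite (@max_r _ _ 0) ?unitI_ge0 // min_r //; exact: unitI_le1.
Qed.

Lemma clampI_0 (r : R) : r <= 0 -> set_val (clampI r) = 0.
Proof. move=> h; rewrite clampI_val max_l // min_r //; exact: ler01. Qed.

Lemma clampI_0_inv (r : R) : set_val (clampI r) = 0 -> r <= 0.
Proof.
move=> h; rewrite leNgt; apply/negP => rp; move: h; rewrite clampI_val; apply/eqP.
by rewrite gt_eqF // lt_min ltr01 lt_max rp orbT.
Qed.

Lemma near_neg (T : topologicalType) (g : T -> R) (p : T) :
  {for p, continuous g} -> g p < 0 -> nbhs p [set y | g y < 0].
Proof.
move=> c gp; have h : nbhs (g p) [set y : R | y < 0].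
  by apply: open_nbhs_nbhs; split => //; exact: open_lt.
exact: c _ h.
Qed.

Lemma epsA_mem (X : Type) (e : X -> X) (y : X) : e y \in range e.
Proof. by apply: mem_set; exists y. Qed.

Definition epsA (X : Type) (e : X -> X) (y : X) : set_type (range e) :=
  @exist _ (fun z => z \in range e) _ (epsA_mem e y).

Lemma cont_epsA (X : topologicalType) (e : X -> X) : continuous e -> continuous (epsA e).
Proof. by move=> ce; apply: cont_sub. Qed.

Unset Implicit Arguments.

Theorem corollary4p7 (B X : topologicalType) (pX : X -> B) :
  continuous pX -> fibrewise_LEC pX ->
  forall e : X -> X, fibrewise_map pX pX e -> (forall x, e (e x) = e x) ->
  closed_fibrewise_cofibred_pair pX (range e).
Proof.
move=> cpX [[_ hepD] [_ _ closD]] e [ce pe0] ee.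
have pe : forall x, pX (e x) = pX x by [].
have comp1 : forall a (t : unitI), set_val t = 0 -> h1 pX (a, t) = f1 pX (Defs.diagonal pX a).
  by move=> a t t0; apply: sv_inj; rewrite !set_valE /=; congr (_, _); exact: t0.
have [Rm [[cR fR] R0 RD]] := hepD _ (pE1 pX) (cont_pE1 cpX) (f1 pX) (h1 pX)
  (conj (@cont_f1 _ _ pX) (fun z => erefl)) (conj (@cont_h1 _ _ pX) (fun x t => erefl)) comp1.
pose W (x : X) (t : unitI) : X * X * R := set_val (Rm (Gam pX pe x, t)).
have W0 : forall x t, set_val t = 0 -> W x t = (x, e x, 0).
  by move=> x t t0; rewrite /W R0.
have GamA : forall y, e y = y -> Gam pX pe y = Defs.diagonal pX y.
  by move=> y ey; apply: sv_inj; rewrite !set_valE /= ey.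
have WA : forall y t, e y = y -> W y t = (y, y, set_val t).
  by move=> y t ey; rewrite /W GamA // RD.
have Wf1 : forall x t, pX (W x t).1.1 = pX x.
  by move=> x t; have := fR (Gam pX pe x) t.
have Wm : forall x t, pX (W x t).1.2 = pX (W x t).1.1 /\ ((W x t).2 = 0 \/ (W x t).1.1 = (W x t).1.2).
  move=> x t; have [h1' h2'] := set_valP (Rm (Gam pX pe x, t)); split => //.
have Wc : continuous (fun p : X * unitI => W p.1 p.2).
  rewrite /W; apply: (cont_comp _ (@cont_val _ _)).
  apply: (cont_comp _ cR); apply: cont_pair; last exact: cont_snd.
  move=> p; apply: (continuous_comp (@cont_fst _ _ p)); exact: cont_Gam.
pose a (p : X * unitI) : R := (W p.1 p.2).2.
pose tau (p : X * unitI) : R := set_val p.2.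
have ac : continuous a.
  by rewrite /a; apply: (cont_comp Wc (@cont_snd _ _)).
have tauc : continuous tau.
  by rewrite /tau; apply: (cont_comp (@cont_snd _ _) (@cont_val _ _)).
have Wqc : forall q : X * unitI -> unitI, continuous q -> continuous (fun p => W p.1 (q p)).
  move=> q cq.
  have := @cont_comp _ _ _ (fun p => (p.1, q p)) (fun r => W r.1 r.2)
    (cont_pair (@cont_fst _ _) cq) Wc.
  exact.
have Aloc : forall x0 (t0 : unitI), set_val t0 = 0 -> e x0 <> x0 -> nbhs (x0, t0) [set p | a p = 0].
  move=> x0 t0 t00 nx.
  pose g (p : X * unitI) := om pX (Rm (Gam pX pe p.1, p.2)).
  have gc : continuous g.
    rewrite /g; apply: (cont_comp _ (@cont_om _ _ pX)).
    apply: (cont_comp _ cR); apply: cont_pair; last exact: cont_snd.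
    move=> p; apply: (continuous_comp (@cont_fst _ _ p)); exact: cont_Gam.
  have gn : nbhs (g (x0, t0)) (~` range (Defs.diagonal pX)).
    apply: open_nbhs_nbhs; split; first exact: closed_openC.
    move=> [y _ hy]; apply: nx.
    have := congr1 set_val hy; rewrite /g /= R0 // !set_valE /=.
    by case=> <- <-.
  have hn : nbhs (x0, t0) (g @^-1` (~` range (Defs.diagonal pX))) := gc (x0, t0) _ gn.
  apply: (filterS _ hn) => p /= hp.
  have [_ [//|h12]] := Wm p.1 p.2.
  exfalso; apply: hp; exists (W p.1 p.2).1.1 => //.
  apply: sv_inj; rewrite !set_valE /=; congr (_, _); exact: h12.
pose be (p : X * unitI) := 6 * a p - 2 * tau p.
have bec : continuous be.
  rewrite /be. exact: (cont_lin ac tauc).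
pose ph1 (p : X * unitI) := clampI (Num.min (tau p) (be p)).
pose ph2 (p : X * unitI) := clampI (Num.min (tau p) (2 * tau p - be p)).
have ph1c : continuous ph1.
  rewrite /ph1.
  by apply: (cont_comp _ cont_clampI); apply: cont_min.
have ph2c : continuous ph2.
  rewrite /ph2.
  by apply: (cont_comp _ cont_clampI); apply: cont_min => //; exact: (cont_lin2 tauc bec).
pose k1 (p : X * unitI) := (W p.1 (ph1 p)).1.1.
pose k2 (p : X * unitI) := (W p.1 (ph2 p)).1.2.
have k1c : continuous k1.
  rewrite /k1.
  exact: (@cont_comp _ _ _ (fun p => W p.1 (ph1 p)) (fun w => w.1.1) (Wqc _ ph1c) (@cont_11 _ _ _)).
have k2c : continuous k2.
  rewrite /k2.
  exact: (@cont_comp _ _ _ (fun p => W p.1 (ph2 p)) (fun w => w.1.2) (Wqc _ ph2c) (@cont_12 _ _ _)).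
pose K (p : X * unitI) := if be p <= tau p then k1 p else k2 p.
have tau0 : forall p, 0 <= tau p by move=> p; exact: unitI_ge0.
have tau1 : forall p, tau p <= 1 by move=> p; exact: unitI_le1.
have a0 : forall p, tau p = 0 -> a p = 0.
  by move=> [x t] /= t0; rewrite /a /= W0.
have Kc : continuous K.
  move=> [x t]; rewrite /K; apply: cont_if; [exact: k1c | exact: k2c |].
  have [hlt|hgt|heq] := ltgtP (be (x, t)) (tau (x, t)).
  - right; have hn := near_pos (@cont_lin2 _ _ _ 1 tauc bec (x, t)) _.
    apply: (filterS _ (hn _)); last by rewrite mul1r subr_gt0.
    by move=> y /=; rewrite mul1r subr_gt0 => h; rewrite (ltW h).
  - right; have hn := near_pos (@cont_lin2 _ _ _ 1 bec tauc (x, t)) _.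
    apply: (filterS _ (hn _)); last by rewrite mul1r subr_gt0.
    by move=> y /=; rewrite mul1r subr_gt0 => h; rewrite leNgt h.
  - have := tau0 (x, t); rewrite le_eqVlt => /orP [/eqP t0|tpos].
    + have ax : a (x, t) = 0 by apply: a0; rewrite -t0.
      have [ex|nx] := pselect (e x = x).
      * left; rewrite /k1 /k2 /= !W0 //=.
          rewrite /ph2 clampI_0 // ge_min; apply/orP; left.
          by rewrite le_eqVlt; apply/orP; left; apply/eqP; exact: esym t0.
        rewrite /ph1 clampI_0 // ge_min; apply/orP; left.
        by rewrite le_eqVlt; apply/orP; left; apply/eqP; exact: esym t0.
      * right; apply: (filterS _ (Aloc x t _ nx)); last exact: esym t0.
        move=> y /= ay.
        rewrite /be ay; have := tau0 y; lra.
    + left; rewrite /k1 /k2 /=.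
      have e1 : ph1 (x, t) = t by apply: clampI_id; rewrite -heq minxx heq.
      have e2 : ph2 (x, t) = t.
        apply: clampI_id; rewrite heq.
        have -> : 2 * tau (x, t) - tau (x, t) = tau (x, t) by lra.
        by rewrite minxx.
      rewrite e1 e2; have [_ [h0|//]] := Wm x t.
      exfalso; move: heq; rewrite /be /a /= h0; lra.
pose sg (p : X * unitI) := clampI (3 * a p - 2 * tau p).
have sgc : continuous sg.
  by rewrite /sg; apply: (cont_comp _ cont_clampI); exact: (cont_lin ac tauc).
have Kfib : forall p, pX (K p) = pX p.1.
  move=> [x t]; rewrite /K; case: ifP => _; first exact: Wf1.
  by rewrite /k2 (proj1 (Wm _ _)) Wf1.
have K0 : forall x (t : unitI), set_val t = 0 -> K (x, t) = x.
  move=> x t t0; have ax : a (x, t) = 0 by rewrite /a /= W0.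
  rewrite /K ifT; last by rewrite /be ax /tau /= t0; lra.
  rewrite /k1 /= W0 // clampI_0 // /be ax /tau /= t0 ge_min lexx //.
split; [split|].
- by split => //; exact: cont_val.
- move=> E pE cpE f h [cf pf] [ch ph] comp.
  pose Hf (p : X * unitI) :=
    if 0 < set_val (sg p) then h (epsA e (K p), sg p) else f (K p).
  exists Hf; split.
  + split; last first.
      move=> x t; rewrite /Hf; case: ifP => _.
        by rewrite ph /= pe Kfib.
      by rewrite pf Kfib.
    have epsKc : continuous (fun p => epsA e (K p)) := cont_comp Kc (cont_epsA ce).
    have g1c : continuous (fun p => h (epsA e (K p), sg p)) := cont_comp (cont_pair epsKc sgc) ch.
    have g2c : continuous (fun p => f (K p)) := cont_comp Kc cf.
    move=> [x t]; rewrite /Hf; apply: (@cont_if _ E (fun p => 0 < set_val (sg p)) (fun p => h (epsA e (K p), sg p)) (fun p => f (K p)) (x, t)); [exact: g1c | exact: g2c |].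
    have := unitI_ge0 (sg (x, t)); rewrite le_eqVlt => /orP [/eqP s0|spos]; last first.
      have sgvc : continuous (fun p => set_val (sg p)).
        exact: (@cont_comp _ _ _ sg set_val sgc (@cont_val _ _)).
      right; have hn := near_pos (sgvc (x, t)) spos.
      by apply: (filterS _ hn) => y /= hy; rewrite hy spos.
    have eqg : e (K (x, t)) = K (x, t) ->
        h (epsA e (K (x, t)), sg (x, t)) = f (K (x, t)) \/
        nbhs (x, t) [set y | (0 < set_val (sg y)) = (0 < set_val (sg (x, t)))].
      move=> eK; left; rewrite comp; last exact: esym s0.
      by congr f; exact: eK.
    have Pp : (0 < set_val (sg (x, t))) = false by rewrite -s0 ltxx.
    have locf : forall Q : set (X * unitI), nbhs (x, t) Q ->
        (forall y, Q y -> 3 * a y - 2 * tau y <= 0) ->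
        nbhs (x, t) [set y | (0 < set_val (sg y)) = (0 < set_val (sg (x, t)))].
      move=> Q hQ hQr; apply: (filterS _ hQ) => y /= /hQr hy.
      by rewrite Pp /sg clampI_0 // ltxx.
    have r0 : 3 * a (x, t) - 2 * tau (x, t) <= 0 := clampI_0_inv (esym s0).
    move: r0; rewrite le_eqVlt => /orP [/eqP r0|rlt]; last first.
      have lc : continuous (fun y => 3 * a y - 2 * tau y) := cont_lin ac tauc.
      have hn := near_neg (lc (x, t)) rlt.
      right; apply: (locf _ hn).
      by move=> y /ltW.
    have := tau0 (x, t); rewrite le_eqVlt => /orP [/eqP t0|tpos].
      have [ex|nx] := pselect (e x = x).
        by apply: eqg; rewrite K0 //; exact: esym t0.
      right; apply: (locf _ (Aloc x t (esym t0) nx)) => y /= ay.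
      by rewrite ay; have := tau0 y; lra.
    apply: eqg.
    have Kx : K (x, t) = e x.
      rewrite /K ifF; last first.
        by apply/negbTE; rewrite -ltNge /be; lra.
      rewrite /k2 /= W0 //; rewrite /ph2 clampI_0 // ge_min; apply/orP; right.
      by rewrite /be; lra.
    by rewrite Kx ee.
  + have H0 : forall p : X * unitI, tau p = 0 -> Hf p = f p.1.
      move=> [x t] t0; rewrite /Hf K0 // ifF //.
      rewrite /sg clampI_0 ?ltxx //.
      have ax : a (x, t) = 0 by rewrite /a /= W0.
      by rewrite ax t0; lra.
    move=> x t t0; exact: (H0 (x, t) t0).
  + have HA : forall (y0 : set_type (range e)) (t : unitI), Hf (set_val y0, t) = h (y0, t).
    move=> y0 t; have ey : e (set_val y0) = set_val y0.
      by move: (set_valP y0) => [z _ hz]; rewrite set_valE /= -hz ee.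
    have ay : a (set_val y0, t) = tau (set_val y0, t) by rewrite /a /= WA.
    have sgt : sg (set_val y0, t) = t.
      by apply: clampI_id; rewrite ay /tau /=; lra.
    have Ky : K (set_val y0, t) = set_val y0.
      by rewrite /K /k1 /k2; case: ifP => _; rewrite WA.
    rewrite /Hf sgt Ky; case: ifP => tp.
      by congr h; congr (_, _); apply: sv_inj; rewrite set_valE /= ey.
    rewrite comp //; have := unitI_ge0 t; rewrite le_eqVlt tp orbF => /eqP <-.
    done.
    move=> y0 t; exact: HA.
- split.
  + move=> u v; exact: sv_inj.
  + move=> U; split => [[V oV hV]|[V [oV hV]]]; exists V => //.
  + have -> : range (@set_val _ (range e)) = Gam pX pe @^-1` range (Defs.diagonal pX).
      apply/seteqP; split => y.
        move=> [u _ <-]; exists (set_val u) => //; apply: sv_inj.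
        rewrite !set_valE /=; move: (set_valP u) => [z _ hz].
        by rewrite -hz ee.
      move=> [z _ hz]; have := congr1 set_val hz; rewrite !set_valE /= => -[hzy hze].
      by exists (epsA e y) => //=; rewrite -hze hzy.
    have hc := proj1 (continuous_closedP (Gam pX pe)) (cont_Gam (pe:=pe) ce) _ closD. exact: hc.
Qed.
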